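(* Let $b\ge1$ and identify each $f\in\mathcal{M}^b$ with the base-$(b+1)$ number $\beta(f)=\sum_{i\ge0}f(i)(b+1)^i$. Then $\beta$ is a monoid homomorphism from $\mathcal{M}^b$ with multiset addition to base-$(b+1)$ numbers with lunar multiplication: $\beta(f+g)=\beta(f)\otimes\beta(g)$ for all $f,g\in\mathcal{M}^b$, and the neutral multiset (the element $0$ with multiplicity $b$) is mapped to the digit $b$, the neutral element of lunar multiplication.
   Context: $\mathcal{M}^b$ is the set of functions $f:\mathbb{N}\to\{0,\ldots,b\}$ with finite support (finite multisets with multiplicities at most $b$). The set-array representation of $f$ is $(A_1,\ldots,A_b)$ with $A_i=\{a:f(a)\ge i\}$, and multiset addition is coordinatewise: $(A_1,\ldots,A_b)+(B_1,\ldots,B_b)=(A_1+B_1,\ldots,A_b+B_b)$, where $S+T=\{s+t:s\in S,t\in T\}$ and $S+\emptyset=\emptyset$. Base-$(b+1)$ lunar product: for $x=\sum_ix_i(b+1)^i$, $y=\sum_jy_j(b+1)^j$ with digits in $\{0,\ldots,b\}$, $x\otimes y=\sum_n(\max_{i+j=n}\min(x_i,y_j))(b+1)^n$. *)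

(* Defs.v *)
From mathcomp Require Import all_boot.
From mathcomp Require Import finmap.
Set Implicit Arguments. Unset Strict Implicit. Unset Printing Implicit Defensive.
Local Open Scope fset_scope.

Definition fmultiset := {fsfun nat -> nat with 0%N}.

Definition inMb (b : nat) (f : fmultiset) : Prop := forall a : nat, (f a <= b)%N.

Definition set_array (f : fmultiset) (i : nat) : pred nat := fun a => (i <= f a)%N.

(* Membership of n in the sumset S + T of two subsets of nat
   (n = s + t with s in S, t in T; necessarily s <= n). *)
Definition in_sumset (S T : pred nat) (n : nat) : bool :=
  [exists s : 'I_n.+1, S s && T (n - s)%N].

(* Multiset addition in M^b: the multiset whose set-array is
   (A_1 + B_1, ..., A_b + B_b); since these sets are nested, the multiplicity
   of n is the number of indices i in {1..b} with n in A_i + B_i.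
   Its support is contained in supp f + supp g. *)
Definition ms_add (b : nat) (f g : fmultiset) : fmultiset :=
  [fsfun n in [fset (i + j)%N | i in finsupp f, j in finsupp g] =>
     \sum_(1 <= i < b.+1) in_sumset (set_array f i) (set_array g i) n].

Definition beta (b : nat) (f : fmultiset) : nat :=
  \sum_(i <- finsupp f) f i * b.+1 ^ i.

Definition digit (b x i : nat) : nat := (x %/ b.+1 ^ i) %% b.+1.

(* Base-(b+1) lunar product; all digits of x (resp. y) at positions >= x
   (resp. >= y) vanish, so positions n <= x + y cover all nonzero digits. *)
Definition lunar_mul (b x y : nat) : nat :=
  \sum_(n < (x + y).+1)
     (\max_(i < n.+1) minn (digit b x i) (digit b y (n - i))) * b.+1 ^ n.

Definition ms_unit (b : nat) : fmultiset := [fsfun n in [fset 0%N] => b].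

(* Main.v *)
Require Import Defs.
From mathcomp Require Import all_boot.
From mathcomp Require Import finmap.
From mathcomp Require Import zify.

Set Implicit Arguments. Unset Strict Implicit. Unset Printing Implicit Defensive.
Local Open Scope fset_scope.
Local Open Scope nat_scope.

Lemma digit_sum (b N : nat) (d : nat -> nat) :
  (forall n, d n <= b) -> (forall n, N <= n -> d n = 0) ->
  forall i, digit b (\sum_(n < N) d n * b.+1 ^ n) i = d i.
Proof.
elim: N d => [|N IH] d db dz i.
  by rewrite big_ord0 /digit div0n mod0n dz.
rewrite big_ord_recl /= expn0 muln1.
have -> : \sum_(i < N) d (lift ord0 i) * b.+1 ^ lift ord0 i
        = \sum_(i < N) d i.+1 * b.+1 ^ i * b.+1.
  by apply: eq_bigr => j _; rewrite /= expnS mulnCA mulnC.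
rewrite -big_distrl /=.
set S := \sum_(i < N) _.
have IH' := IH (fun n => d n.+1) (fun n => db n.+1) (fun n h => dz n.+1 h).
case: i => [|k].
  rewrite /digit expn0 divn1 addnC modnMDl modn_small //.
  exact: db.
rewrite /digit expnS divnMA addnC divnMDl // (@divn_small (d 0) b.+1) ?ltnS ?db // addn0.
exact: IH'.
Qed.

Lemma sum_digits_aux (b N x : nat) :
  \sum_(n < N) digit b x n * b.+1 ^ n + b.+1 ^ N * (x %/ b.+1 ^ N) = x.
Proof.
elim: N => [|N IH].
  by rewrite big_ord0 expn0 divn1 mul1n.
rewrite big_ord_recr /= expnSr divnMA.
set q := x %/ b.+1 ^ N.
set P := b.+1 ^ N.
rewrite -[in RHS]IH -/P -/q -addnA; congr (_ + _).
rewrite /digit -/q {3}(divn_eq q b.+1) mulnDr addnC; congr (_ + _); last by rewrite mulnC.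
by rewrite mulnA mulnAC.
Qed.

Lemma sum_digits (b N x : nat) : x < b.+1 ^ N ->
  \sum_(n < N) digit b x n * b.+1 ^ n = x.
Proof.
move=> h; have := sum_digits_aux b N x.
by rewrite divn_small // muln0 addn0.
Qed.

Lemma beta_sum (b N : nat) (f : fmultiset) :
  (forall i, i \in finsupp f -> i < N) ->
  beta b f = \sum_(n < N) f n * b.+1 ^ n.
Proof.
move=> hN; rewrite /beta -(big_mkord predT (fun n => f n * b.+1 ^ n)).
rewrite /index_iota subn0.
have -> : \sum_(n <- iota 0 N) f n * b.+1 ^ n
        = \sum_(n <- iota 0 N | n \in finsupp f) f n * b.+1 ^ n.
  rewrite [RHS]big_mkcond; apply: eq_bigr => n _; case: ifP => // /negbT.
  by rewrite mem_finsupp negbK => /eqP ->.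
rewrite -[RHS]big_filter; apply: perm_big; apply: uniq_perm.
- exact: fset_uniq.
- by rewrite filter_uniq // iota_uniq.
move=> n; rewrite mem_filter mem_iota add0n /=.
by case H: (n \in finsupp f) => //=; rewrite (hN _ H).
Qed.

Lemma digit_beta (b : nat) (f : fmultiset) : inMb b f ->
  forall i, digit b (beta b f) i = f i.
Proof.
move=> hf.
set N := (\max_(i <- finsupp f) i).+1.
have hN : forall i, i \in finsupp f -> i < N.
  move=> i hi; rewrite ltnS; exact: (@leq_bigmax_seq _ (enum_fset (finsupp f)) predT (fun i => i) i).
rewrite (beta_sum b hN).
apply: (digit_sum (d := fun n => f n)) => // n hn.
apply/eqP; apply: contraLR hn => hn.
by rewrite -ltnNge hN // mem_finsupp.
Qed.

Lemma digit_nz (b x i : nat) : 0 < b -> digit b x i != 0 -> i < x.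
Proof.
move=> hb; apply: contraR; rewrite -leqNgt => h.
have hx : x < b.+1 ^ i.
  by apply: (leq_ltn_trans h); apply: ltn_expl; rewrite ltnS.
by rewrite /digit divn_small // mod0n.
Qed.

Definition M (f g : fmultiset) (n : nat) :=
  \max_(i < n.+1) minn (f i) (g (n - i)).

Lemma in_sumset_M (f g : fmultiset) (i n : nat) : 0 < i ->
  in_sumset (set_array f i) (set_array g i) n = (i <= M f g n).
Proof.
move=> hi; rewrite /in_sumset /set_array /M.
apply/existsP/idP.
  case=> s /andP [h1 h2].
  have := @leq_bigmax _ (fun j : 'I_n.+1 => minn (f j) (g (n - j))) s. move=> /= HH. apply: leq_trans HH.
  by rewrite leq_min h1 h2.
move=> h; apply/existsP; apply: contraLR h => /existsPn H.
rewrite -ltnNge.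
suff: \max_(i0 < n.+1) minn (f i0) (g (n - i0)) <= i.-1 by lia.
apply/bigmax_leqP => s _; have := H s.
rewrite negb_and -!ltnNge => /orP [h|h]; lia.
Qed.

Lemma sum_le (b m : nat) : \sum_(1 <= i < b.+1) (i <= m) = minn m b.
Proof.
elim: b => [|b IH]; first by rewrite big_geq // minn0.
rewrite big_nat_recr //= IH; case: leqP => h; lia.
Qed.

Lemma M_le b (f g : fmultiset) n : inMb b f -> M f g n <= b.
Proof.
move=> hf; apply/bigmax_leqP => s _.
by apply: leq_trans (geq_minl _ _) (hf _).
Qed.

Lemma ms_add_val b (f g : fmultiset) n : inMb b f -> inMb b g ->
  ms_add b f g n = M f g n.
Proof.
move=> hf hg; rewrite /ms_add fsfunE; case: ifP => Hn.
  under eq_big_nat => i /andP [hi _] do rewrite in_sumset_M //.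
  by rewrite sum_le; apply/minn_idPl; apply: M_le.
apply/esym/eqP; rewrite -leqn0; apply/bigmax_leqP => s _.
rewrite leqn0; apply/negPn/negP => hs.
have hsn : s <= n by rewrite -ltnS.
have h1 : f s != 0 by apply: contra hs => /eqP ->; rewrite min0n.
have h2 : g (n - s) != 0 by apply: contra hs => /eqP ->; rewrite minn0.
move/negbT: Hn => /negP; apply.
rewrite -(subnKC hsn).
by apply: in_imfset2; rewrite /= mem_finsupp.
Qed.

Lemma ms_unit_val b n : ms_unit b n = if n == 0 then b else 0.
Proof. by rewrite /ms_unit fsfunE inE. Qed.

Theorem mainTheorem11 (b : nat) (hb : (1 <= b)%N) :
  (forall f g : fmultiset, inMb b f -> inMb b g ->
     inMb b (ms_add b f g) /\
     beta b (ms_add b f g) = lunar_mul b (beta b f) (beta b g)) /\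
  inMb b (ms_unit b) /\
  beta b (ms_unit b) = b /\
  (forall x : nat, lunar_mul b b x = x /\ lunar_mul b x b = x).
Proof.
have hu : inMb b (ms_unit b) by move=> a; rewrite ms_unit_val; case: ifP.
have bu : beta b (ms_unit b) = b.
  rewrite (@beta_sum b 1) ?big_ord1 ?ms_unit_val ?muln1 //.
  by move=> i; rewrite mem_finsupp ms_unit_val; case: ifP => // /eqP -> .
have db i : digit b b i = if i == 0 then b else 0.
  by have := digit_beta hu i; rewrite bu ms_unit_val.
have dle x n : digit b x n <= b by rewrite /digit -ltnS ltn_mod.
have xlt x : x < b.+1 ^ (b + x).+1.
  apply: leq_trans (ltn_expl _ _); last by rewrite ltnS.
  lia.
have xlt' x : x < b.+1 ^ (x + b).+1 by rewrite addnC.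
split; [|split; [exact: hu|split; [exact: bu|]]].
- move=> f g hf hg; split.
    by move=> a; rewrite ms_add_val //; apply: M_le.
  set x := beta b f; set y := beta b g.
  rewrite (@beta_sum b (x + y).+1).
    rewrite /lunar_mul; apply: eq_bigr => n _; rewrite ms_add_val // /M.
    congr (_ * _); apply: eq_bigr => i _; by rewrite !digit_beta.
  move=> i; rewrite mem_finsupp ms_add_val //; apply: contraR.
  rewrite -leqNgt => hi; apply/eqP/eqP; rewrite -leqn0.
  apply/bigmax_leqP => s _.
  case: (posnP (f s)) => [->|fs]; first by rewrite min0n.
  case: (posnP (g (i - s))) => [->|gs]; first by rewrite minn0.
  have h1 : s < x by apply: (digit_nz hb); rewrite digit_beta // -lt0n.
  have h2 : i - s < y by apply: (digit_nz hb); rewrite digit_beta // -lt0n.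
  have := ltn_ord s; lia.
- move=> x; split.
    rewrite /lunar_mul -[RHS](sum_digits (xlt x)).
    apply: eq_bigr => n _; congr (_ * _).
    rewrite big_ord_recl db /= subn0 big1 ?maxn0.
      by apply/minn_idPr.
    by move=> i _; rewrite db /= min0n.
  rewrite /lunar_mul -[RHS](sum_digits (xlt' x)).
  apply: eq_bigr => n _; congr (_ * _).
  rewrite big_ord_recr /= subnn db /= big1 ?max0n.
    by apply/minn_idPl.
  move=> i _; rewrite db /=.
  have := ltn_ord i; case: ifP => // /eqP; lia.
Qed.
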